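(* Let $\theta,\eta\in[0,\infty)^V$, let $(X(t))_{t\ge0}$ be the solution of $E^{W,\theta,\eta}_V(X)$ driven by the Brownian motion $B$, with hitting times $T$, and let $s\ge0$. Set $$\widetilde W^{(s)}=WK_{s\wedge T}^{-1},\qquad\widetilde\eta^{(s)}=\eta+\widetilde W^{(s)}\big((s\wedge T)\eta\big).$$ Then $(X(t+s))_{t\ge0}$ is (pathwise) the solution of $E^{\widetilde W^{(s)},X(s),\widetilde\eta^{(s)}}_V(X)$ driven by the shifted Brownian motion $(B(s+t)-B(s))_{t\ge0}$; its hitting times are $T-s\wedge T$.
   Context: Let $N\ge1$, $V=\{1,\dots,N\}$, and $W=(W_{i,j})$ a symmetric irreducible matrix with nonnegative entries (diagonal entries may be nonzero). Vectors in $\mathbb R^V$ are identified with diagonal matrices; $K_t=\mathrm{Id}-tW$ for $t\in[0,\infty)^V$; $t\wedge T=(\min(t,T_i))_i$. For a finite set $S$, a symmetric nonnegative matrix $M$ on $S$, and $\vartheta,\kappa\in[0,\infty)^S$, the S.D.E. $E^{M,\vartheta,\kappa}_S(X)$ driven by a standard $|S|$-dimensional Brownian motion $B$ is: $X_i(t)=\vartheta_i+\int_0^t\mathbf 1_{u<T_i}dB_i(u)-\int_0^t\mathbf 1_{u<T_i}((M\psi(u))_i+\kappa_i)du$, $i\in S$, with $T_i=\inf\{t\ge0:X_i(t)=0\}$, $\psi(t)=(\mathrm{Id}-(t\wedge T)M)^{-1}(X(t)+(t\wedge T)\kappa)$; it has a unique pathwise solution for all $t\ge0$. *)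

(* Defs.v *)
From Stdlib Require Import Reals.
From mathcomp Require Import all_boot.
Set Implicit Arguments. Unset Strict Implicit. Unset Printing Implicit Defensive.

Local Open Scope R_scope.

(* vectors and matrices indexed by V = 'I_N *)
Definition vec (N : nat) := 'I_N -> R.
Definition mat (N : nat) := 'I_N -> 'I_N -> R.

Definition mxmul N (A B : mat N) : mat N :=
  fun i j => \big[Rplus/R0]_(k < N) (A i k * B k j).
Definition mxapp N (A : mat N) (v : vec N) : vec N :=
  fun i => \big[Rplus/R0]_(k < N) (A i k * v k).
Definition idm N : mat N := fun i j => if i == j then 1 else 0.
Definition diagm N (d : vec N) : mat N := fun i j => if i == j then d i else 0.
Definition mxsub N (A B : mat N) : mat N := fun i j => A i j - B i j.
Definition vadd N (u v : vec N) : vec N := fun i => u i + v i.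
Fixpoint mxpow N (A : mat N) (k : nat) : mat N :=
  match k with O => @idm N | S k' => mxmul A (mxpow A k') end.

Definition is_inv N (A B : mat N) : Prop := mxmul A B = @idm N /\ mxmul B A = @idm N.

Definition irreducible N (W : mat N) : Prop :=
  forall i j : 'I_N, exists k : nat, 0 < mxpow W k i j.

(* times in [0, +infinity]: None encodes +infinity *)
Definition tmin (t : R) (Ti : option R) : R :=
  match Ti with Some tau => Rmin t tau | None => t end.
Definition tminv N (t : R) (T : 'I_N -> option R) : vec N := fun i => tmin t (T i).
Definition ind_lt (u : R) (Ti : option R) : R :=
  match Ti with
  | Some tau => if Rlt_dec u tau then 1 else 0
  | None => 1
  end.
Definition tshift (Ti : option R) (s : R) : option R :=
  match Ti with Some tau => Some (tau - Rmin s tau) | None => None end.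

(* Ti = inf { t >= 0 : f t = 0 }  (inf of the empty set = +infinity) *)
Definition is_hitting_time (f : R -> R) (Ti : option R) : Prop :=
  match Ti with
  | Some tau =>
      (forall t, 0 <= t -> f t = 0 -> tau <= t) /\
      (forall tau', (forall t, 0 <= t -> f t = 0 -> tau' <= t) -> tau' <= tau)
  | None => forall t, 0 <= t -> f t <> 0
  end.

Definition Kmat N (t : vec N) (M : mat N) : mat N := mxsub (@idm N) (mxmul (diagm t) M).

(* Pathwise form of the S.D.E.  The stochastic integral int_0^t 1_{u<T_i} dB_i(u) of the
   indicator of the stochastic interval [0,T_i) is B_i(t /\ T_i) - B_i(0). *)
Definition solves_E N (M : mat N) (theta kappa : vec N) (B : R -> vec N)
    (X : R -> vec N) (T : 'I_N -> option R) : Prop :=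
  (forall i, is_hitting_time (fun t => X t i) (T i)) /\
  exists psi : R -> vec N,
    (forall u, 0 <= u -> exists Kinv : mat N,
        is_inv (Kmat (tminv u T) M) Kinv /\
        psi u = mxapp Kinv (vadd (X u) (fun i => tminv u T i * kappa i))) /\
    (forall (i : 'I_N) (t : R), 0 <= t ->
       exists pr : Riemann_integrable
                     (fun u => ind_lt u (T i) * (mxapp M (psi u) i + kappa i)) 0 t,
         X t i = theta i + (B (tmin t (T i)) i - B 0 i) - RiemannInt pr).

(* Main.v *)
Require Import Defs.
From Stdlib Require Import Reals.
From mathcomp Require Import all_boot.
From Stdlib Require Import Lra Classical FunctionalExtensionality.
From Coquelicot Require Coquelicot.
From mathcomp Require Import all_algebra.
From mathcomp Require Import Rstruct.
From mathcomp Require lra.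
Set Implicit Arguments. Unset Strict Implicit.

Module IntHelpers.
Import Coquelicot.Coquelicot.
Lemma shift_int (f g : R -> R) (s t : R) (pr1 : Riemann_integrable f 0 (t + s))
  (prs : Riemann_integrable f 0 s) :
  0 <= s -> 0 <= t -> (forall u, 0 <= u <= t -> g u = f (u + s)) ->
  exists pr2 : Riemann_integrable g 0 t,
    RiemannInt pr1 = RiemannInt prs + RiemannInt pr2.
Proof.
  intros hs ht hg.
  have e1 := ex_RInt_Reals_1 _ _ _ pr1.
  have e2 : ex_RInt f s (t + s) by apply: (ex_RInt_Chasles_2 f 0 s); [lra| exact e1].
  have e3 : ex_RInt (fun y => scal 1 (f (1 * y + s))) 0 t.
  { apply: ex_RInt_comp_lin. replace (1*0+s) with s by ring. replace (1*t+s) with (t+s) by ring. exact e2. }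
  have e4 : ex_RInt g 0 t.
  { apply: (ex_RInt_ext _ _ _ _ _ e3). intros x Hx. rewrite Rmin_left in Hx; [|lra]. rewrite Rmax_right in Hx; [|lra].
    rewrite hg; [|lra]. rewrite scal_one. f_equal; ring. }
  exists (ex_RInt_Reals_0 _ _ _ e4).
  rewrite -!RInt_Reals.
  rewrite -(RInt_Chasles f 0 s (t+s)); [| apply: (ex_RInt_Chasles_1 f 0 s (t+s)); [lra|exact e1] | exact e2].
  change (RInt f 0 s + RInt f s (t+s) = RInt f 0 s + RInt g 0 t). f_equal.
  have := RInt_comp_lin f 1 s 0 t. replace (1*0+s) with s by ring. replace (1*t+s) with (t+s) by ring.
  move=> <-; [| exact e2].
  apply: RInt_ext. intros x Hx. rewrite Rmin_left in Hx; [|lra]. rewrite Rmax_right in Hx; [|lra].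
  rewrite hg; [|lra]. rewrite scal_one. f_equal; ring.
Qed.

Lemma const_after (f : R -> R) (tau t : R) (prt : Riemann_integrable f 0 t)
  (prtau : Riemann_integrable f 0 tau) :
  0 <= tau <= t -> (forall u, tau <= u -> f u = 0) -> RiemannInt prt = RiemannInt prtau.
Proof.
  intros h hf.
  have e1 := ex_RInt_Reals_1 _ _ _ prt.
  rewrite -!RInt_Reals.
  rewrite -(RInt_Chasles f 0 tau t); [| apply: (ex_RInt_Chasles_1 f 0 tau t); [lra|exact e1] | apply: (ex_RInt_Chasles_2 f 0 tau t); [lra|exact e1]].
  rewrite (RInt_ext f (fun _ => 0) tau t).
  - rewrite RInt_const. rewrite scal_zero_r. rewrite plus_zero_r. reflexivity.
  - intros x Hx. apply hf. rewrite Rmin_left in Hx; lra.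
Qed.
End IntHelpers.

Module MxHelpers.
Import GRing.Theory.
Import mathcomp.algebra_tactics.lra.
Local Open Scope ring_scope.

Definition toM N (A : mat N) : 'M[R]_N := \matrix_(i, j) A i j.
Definition toV N (v : vec N) : 'cV[R]_N := \col_i v i.

Lemma toM_inj N (A B : mat N) : toM A = toM B -> A = B.
Proof.
move=> h; apply: functional_extensionality => i; apply: functional_extensionality => j.
by have := congr1 (fun M : 'M[R]_N => M i j) h; rewrite /toM !mxE.
Qed.

Lemma toV_inj N (u v : vec N) : toV u = toV v -> u = v.
Proof.
move=> h; apply: functional_extensionality => i.
by have := congr1 (fun M : 'cV[R]_N => M i 0) h; rewrite /toV !mxE.
Qed.

Lemma toV_E N (v : vec N) i : toV v i 0 = v i.
Proof. by rewrite /toV mxE. Qed.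

Lemma toM_mul N (A B : mat N) : toM (mxmul A B) = toM A *m toM B.
Proof.
apply/matrixP => i j; rewrite !mxE /mxmul.
by apply: eq_bigr => k _; rewrite !mxE.
Qed.

Lemma toV_app N (A : mat N) v : toV (mxapp A v) = toM A *m toV v.
Proof.
apply/matrixP => i j; rewrite !mxE /mxapp ord1.
by apply: eq_bigr => k _; rewrite !mxE.
Qed.

Lemma toV_add N (u v : vec N) : toV (vadd u v) = toV u + toV v.
Proof. by apply/matrixP => i j; rewrite !mxE. Qed.

Lemma toM_idm N : toM (@idm N) = 1%:M.
Proof. by apply/matrixP => i j; rewrite !mxE /idm; case: (i == j). Qed.

Lemma toM_sub N (A B : mat N) : toM (Defs.mxsub A B) = toM A - toM B.
Proof. by apply/matrixP => i j; rewrite !mxE. Qed.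

Lemma toM_Kmat N t (M : mat N) : toM (Kmat t M) = 1%:M - toM (diagm t) *m toM M.
Proof. by rewrite /Kmat toM_sub toM_idm toM_mul. Qed.

Lemma toV_diag N (d v : vec N) : toV (fun i => (d i * v i)%R) = toM (diagm d) *m toV v.
Proof.
apply/matrixP => i j; rewrite !mxE ord1 (bigD1 i) //= !mxE /diagm eqxx big1 ?addr0 //.
by move=> k /negbTE hk; rewrite !mxE eq_sym hk mul0r.
Qed.

Lemma toM_diag_add N (a b : vec N) : toM (diagm (vadd a b)) = toM (diagm a) + toM (diagm b).
Proof. by apply/matrixP => i j; rewrite !mxE /diagm /vadd; case: (i == j); rewrite ?addr0. Qed.

Lemma is_invE N (A B : mat N) : is_inv A B <-> (toM A *m toM B = 1%:M /\ toM B *m toM A = 1%:M).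
Proof.
split=> [[h1 h2]|[h1 h2]].
- by rewrite -!toM_mul h1 h2 toM_idm.
- by split; apply: toM_inj; rewrite toM_mul toM_idm.
Qed.

Lemma hK_lemma N (A Bm Wm Ka' : 'M[R]_N) :
  (1%:M - A *m Wm) *m Ka' = 1%:M ->
  1%:M - Bm *m (Wm *m Ka') = (1%:M - (A + Bm) *m Wm) *m Ka'.
Proof.
move=> h1.
have e : Ka' - A *m Wm *m Ka' = 1%:M by rewrite -h1 mulmxBl mul1mx.
rewrite mulmxBl mul1mx (mulmxDl A Bm Wm) mulmxDl opprD addrA e mulmxA //.
Qed.

Lemma key_inv N (A Bm Wm Ka' Kb' : 'M[R]_N) :
  (1%:M - A *m Wm) *m Ka' = 1%:M -> Ka' *m (1%:M - A *m Wm) = 1%:M ->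
  (1%:M - (A + Bm) *m Wm) *m Kb' = 1%:M -> Kb' *m (1%:M - (A + Bm) *m Wm) = 1%:M ->
  (1%:M - Bm *m (Wm *m Ka')) *m ((1%:M - A *m Wm) *m Kb') = 1%:M /\
  ((1%:M - A *m Wm) *m Kb') *m (1%:M - Bm *m (Wm *m Ka')) = 1%:M.
Proof.
move=> h1 h2 h3 h4.
have hK := hK_lemma Bm h1.
rewrite hK; split.
- by rewrite mulmxA -(mulmxA _ Ka') h2 mulmx1 h3.
- by rewrite mulmxA -(mulmxA _ Kb') h4 mulmx1 h1.
Qed.

Lemma key_psi N (A Bm Wm Ka' Kb' : 'M[R]_N) (x e : 'cV[R]_N) :
  (1%:M - A *m Wm) *m Ka' = 1%:M ->
  Kb' *m (1%:M - (A + Bm) *m Wm) = 1%:M ->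
  (1%:M - A *m Wm) *m (Kb' *m (x + (A + Bm) *m e)) - A *m e =
  ((1%:M - A *m Wm) *m Kb') *m (x + Bm *m (e + (Wm *m Ka') *m (A *m e))).
Proof.
move=> h1 h4.
set P := (1%:M - A *m Wm) *m Kb'.
have hK := hK_lemma Bm h1.
have hAe : A *m e = P *m ((1%:M - Bm *m (Wm *m Ka')) *m (A *m e)).
  rewrite hK /P !mulmxA -(mulmxA _ Kb') h4 mulmx1 h1 mul1mx //.
rewrite (mulmxA (1%:M - A *m Wm) Kb') -/P {1}hAe -mulmxBr; congr (P *m _).
rewrite mulmxBl mul1mx !mulmxDl !mulmxDr !mulmxA. apply/matrixP => i j. rewrite !mxE.
lra.
Qed.

Lemma key_drift N (A Wm Ka' : 'M[R]_N) (p e : 'cV[R]_N) :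
  Ka' *m (1%:M - A *m Wm) = 1%:M ->
  (Wm *m Ka') *m ((1%:M - A *m Wm) *m p - A *m e) + (e + (Wm *m Ka') *m (A *m e)) =
  Wm *m p + e.
Proof.
move=> h2.
rewrite mulmxBr !mulmxA -(mulmxA Wm Ka' (1%:M - A *m Wm)) h2 mulmx1.
apply/matrixP => i j; rewrite !mxE. lra.
Qed.


Definition psi'_def N (Ka : mat N) (p aeta : vec N) : vec N :=
  fun i => (toM Ka *m toV p - toV aeta) i 0.

Lemma toV_psi' N (Ka : mat N) p aeta : toV (psi'_def Ka p aeta) = toM Ka *m toV p - toV aeta.
Proof. by apply/matrixP => i j; rewrite ord1 /psi'_def !mxE. Qed.

Lemma inv_step N (W Ka' Kb' : mat N) (a b : vec N) :
  is_inv (Kmat a W) Ka' -> is_inv (Kmat (vadd a b) W) Kb' ->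
  is_inv (Kmat b (mxmul W Ka')) (mxmul (Kmat a W) Kb').
Proof.
rewrite !is_invE !toM_Kmat !toM_mul toM_Kmat toM_diag_add => [[h1 h2] [h3 h4]].
exact: key_inv.
Qed.

Lemma psi_step N (W Ka' Kb' : mat N) (a b x eta : vec N) :
  is_inv (Kmat a W) Ka' -> is_inv (Kmat (vadd a b) W) Kb' ->
  psi'_def (Kmat a W) (mxapp Kb' (vadd x (fun i => Rmult (vadd a b i) (eta i)))) (fun i => Rmult (a i) (eta i))
  = mxapp (mxmul (Kmat a W) Kb')
      (vadd x (fun i => Rmult (b i) (vadd eta (mxapp (mxmul W Ka') (fun i => Rmult (a i) (eta i))) i))).
Proof.
rewrite !is_invE !toM_Kmat toM_diag_add => [[h1 h2] [h3 h4]].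
apply: toV_inj.
rewrite toV_psi' !toV_app !toV_add !toV_diag toV_add toV_app toV_diag !toM_mul toM_Kmat toM_diag_add.
exact: key_psi.
Qed.

Lemma drift_step N (W Ka' : mat N) (a p eta : vec N) i :
  is_inv (Kmat a W) Ka' ->
  Rplus (mxapp (mxmul W Ka') (psi'_def (Kmat a W) p (fun i => Rmult (a i) (eta i))) i)
        (vadd eta (mxapp (mxmul W Ka') (fun i => Rmult (a i) (eta i))) i)
  = Rplus (mxapp W p i) (eta i).
Proof.
rewrite is_invE toM_Kmat => [[h1 h2]].
have E : vadd (mxapp (mxmul W Ka') (psi'_def (Kmat a W) p (fun i => Rmult (a i) (eta i))))
            (vadd eta (mxapp (mxmul W Ka') (fun i => Rmult (a i) (eta i))))
         = vadd (mxapp W p) eta.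
  apply: toV_inj.
  rewrite !toV_add !toV_app toV_psi' toV_diag toM_mul toM_Kmat.
  exact: key_drift.
exact: (congr1 (fun v => v i) E).
Qed.

End MxHelpers.

Import IntHelpers MxHelpers.
Local Open Scope R_scope.

Lemma tmin_split (Ti : option R) (s u : R) : 0 <= s -> 0 <= u ->
  tmin (u + s) Ti = tmin s Ti + tmin u (tshift Ti s).
Proof.
move=> hs hu; case: Ti => [tau|] /=; last lra.
unfold Rmin; repeat destruct Rle_dec; lra.
Qed.

Lemma ind_shift (Ti : option R) (s u : R) : 0 <= s -> 0 <= u ->
  ind_lt u (tshift Ti s) = ind_lt (u + s) Ti.
Proof.
move=> hs hu; case: Ti => [tau|] //=.
unfold Rmin; repeat destruct Rle_dec; repeat destruct Rlt_dec; simpl; lra.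
Qed.

Lemma Bshift (h : R -> R) (Ti : option R) (s t : R) : 0 <= s -> 0 <= t ->
  h (s + tmin t (tshift Ti s)) - h s - (h (s + 0) - h s) =
  h (tmin (t + s) Ti) - h 0 - (h (tmin s Ti) - h 0).
Proof.
move=> hs ht; rewrite Rplus_0_r.
case: Ti => [tau|] /=; last by rewrite Rplus_comm; lra.
destruct (Rle_dec tau s) as [hts|hts].
- rewrite (Rmin_right s tau) // (Rmin_right (t+s) tau); last lra.
  replace (tau - tau) with 0 by ring. rewrite Rmin_right // Rplus_0_r. lra.
- rewrite (Rmin_left s tau); last lra.
  unfold Rmin; repeat destruct Rle_dec; try lra.
  + replace (s + t) with (t + s) by ring. lra.
  + replace (s + (tau - s)) with tau by ring. lra.
Qed.

Lemma int_step (f g : R -> R) (s t x_ts x_s th b1 b2 c : R)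
  (pr1 : Riemann_integrable f 0 (t + s)) (prs : Riemann_integrable f 0 s) :
  0 <= s -> 0 <= t ->
  x_ts = th + b1 - RiemannInt pr1 -> x_s = th + b2 - RiemannInt prs ->
  c = b1 - b2 -> (forall u, 0 <= u <= t -> g u = f (u + s)) ->
  exists pr : Riemann_integrable g 0 t, x_ts = x_s + c - RiemannInt pr.
Proof.
move=> hs ht E1 E2 Ec hg.
have [pr2 E] := shift_int pr1 prs hs ht hg.
exists pr2. rewrite E1 E2 Ec E. lra.
Qed.

Lemma hit_shift (x : R -> R) (Ti : option R) (s : R) (f : R -> R) (th b0 : R) (B1 : R -> R) :
  0 <= s -> is_hitting_time x Ti ->
  (forall t, 0 <= t -> exists pr : Riemann_integrable (fun u => ind_lt u Ti * f u) 0 t,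
       x t = th + (B1 (tmin t Ti) - b0) - RiemannInt pr) ->
  is_hitting_time (fun t => x (t + s)) (tshift Ti s).
Proof.
move=> hs; case: Ti => [tau|] /=; last first.
  move=> H _ t ht; apply: H; lra.
move=> [H1 H2] Hint.
have htau : 0 <= tau by apply: H2 => t ht _.
have [z [hz0 hz]] : exists z, 0 <= z /\ x z = 0.
  apply: NNPP => hn.
  have : tau + 1 <= tau.
    apply: H2 => t ht hx; exfalso; apply: hn; exists t; split => //.
  lra.
have hconst : forall t, tau <= t -> x t = x tau.
  move=> t htt.
  have [prt Et] := Hint t (Rle_trans _ _ _ htau htt).
  have [prtau Etau] := Hint tau htau.
  rewrite Et Etau (Rmin_right t tau) // Rmin_right; last lra.
  rewrite (const_after prt prtau); first lra.
  - lra.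
  - move=> u hu /=. destruct Rlt_dec; simpl; lra.
have hzero : forall t, tau <= t -> x t = 0.
  move=> t ht; rewrite hconst //. rewrite -(hconst z); [exact hz| exact: H1].
destruct (Rle_dec tau s) as [hts|hts].
- rewrite Rmin_right //. replace (tau - tau) with 0 by ring.
  split.
  + move=> t ht _; lra.
  + move=> tau' H; apply: H; first lra. apply: hzero; lra.
- rewrite Rmin_left; last lra.
  split.
  + move=> t ht hx. have := H1 (t + s) ltac:(lra) hx. lra.
  + move=> tau' H.
    have : tau' + s <= tau.
      apply: H2 => t ht hx.
      have htt := H1 t ht hx.
      have := H (t - s) ltac:(lra). replace (t - s + s) with t by ring.
      move=> /(_ hx). lra.
    lra.
Qed.

Theorem mainTheorem9 (N : nat) (W : mat N) (theta eta : vec N)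
    (B : R -> vec N) (X : R -> vec N) (T : 'I_N -> option R) (s : R) :
  (0 < N)%N ->
  (forall i j, W i j = W j i) ->
  (forall i j, 0 <= W i j) ->
  irreducible W ->
  (forall i, 0 <= theta i) ->
  (forall i, 0 <= eta i) ->
  (forall i, continuity (fun t => B t i)) ->
  solves_E W theta eta B X T ->
  0 <= s ->
  exists Kinv : mat N,
    is_inv (Kmat (tminv s T) W) Kinv /\
    let Wt := mxmul W Kinv in
    let etat := vadd eta (mxapp Wt (fun i => tminv s T i * eta i)) in
    solves_E Wt (X s) etat (fun t i => B (s + t) i - B s i)
      (fun t => X (t + s)) (fun i => tshift (T i) s).
Proof.
move=> _ _ _ _ _ _ _ [Hhit [psi [Hpsi Hint]]] hs.
have [Ka' [HinvA Hpsis]] := Hpsi s hs.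
exists Ka'; split => //.
cbv zeta.
split.
  move=> i.
  refine (@hit_shift (fun t => X t i) (T i) s _ (theta i) (B 0 i) (fun r => B r i) hs (Hhit i) _).
  move=> t ht. exact: (Hint i t ht).
exists (fun u => psi'_def (Kmat (tminv s T) W) (psi (u + s)) (fun i => tminv s T i * eta i)).
split.
- move=> u hu.
  have hus : 0 <= u + s by lra.
  have [Kb' [HinvB HpsiB]] := Hpsi (u + s) hus.
  have Esplit : tminv (u + s) T = vadd (tminv s T) (tminv u (fun i => tshift (T i) s)).
    apply: functional_extensionality => i. rewrite /tminv /vadd. exact: tmin_split.
  rewrite Esplit in HinvB HpsiB.
  exists (mxmul (Kmat (tminv s T) W) Kb'); split.
  + exact: inv_step.
  + rewrite HpsiB. exact: psi_step.
- move=> i t ht.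
  have hts : 0 <= t + s by lra.
  have [pr1 E1] := Hint i (t + s) hts.
  have [prs Es] := Hint i s hs.
  eapply int_step; [exact hs | exact ht | exact E1 | exact Es | |].
  + cbv beta. exact: (Bshift (fun r => B r i) (T i) hs ht).
  + move=> u hu. cbv beta.
    rewrite (ind_shift (T i) hs (proj1 hu)).
    f_equal. exact (@drift_step N W Ka' (tminv s T) (psi (u + s)) eta i HinvA).
Qed.
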